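(* For $i\in\mathbb Z_{\ge0}$, $J\in\mathbb Z_{>0}$ and $0\le j\le J$, $$W_J(i,J;i+J-j,j\mid v,\lambda)=f(2\eta)^{J-j}\frac{[2\eta i-\eta\Lambda-v]_j}{[\eta\Lambda-v]_J}\cdot\frac{[v+\lambda-\eta\Lambda+2\eta(i+2J-j-1)]_{J-j}\,[\lambda+2\eta(i+J-\Lambda-1)]_j}{[\lambda+2\eta(J-1)]_J}.$$
   Context: Fix $\eta,\tau\in\mathbb C$, $\operatorname{Im}\tau>0$. $f(z)$ denotes either $\theta(z)=-\sum_{j\in\mathbb Z}\exp\big(\pi\mathbf i\tau(j+\tfrac12)^2+2\pi\mathbf i(j+\tfrac12)(z+\tfrac12)\big)$ or $\sin(\pi z)$. Elliptic Pochhammer: $[a]_k=\prod_{m=0}^{k-1}f(a-2\eta m)$ for $k\ge0$, $[a]_k=\prod_{m=1}^{-k}f(a+2\eta m)^{-1}$ for $k<0$. Unfused weights ($k\ge0$): $W_1(k,0;k,0\mid v,\lambda,\Lambda)=\frac{f(\eta(\Lambda-2k)-v)f(\lambda+2k\eta)}{f(\eta\Lambda-v)f(\lambda)}$, $W_1(k,1;k+1,0\mid\cdot)=\frac{f(v+\lambda+\eta(2k+2-\Lambda))f(2\eta)}{f(\eta\Lambda-v)f(\lambda)}$, $W_1(k,0;k-1,1\mid\cdot)=\frac{f(\lambda-v+\eta(2k-2-\Lambda))f(2\eta(\Lambda+1-k))f(2k\eta)}{f(\eta\Lambda-v)f(\lambda)f(2\eta)}$ ($k\ge1$), $W_1(k,1;k,1\mid\cdot)=\frac{f(\eta(2k-\Lambda)-v)f(\lambda+2\eta(k-\Lambda))}{f(\eta\Lambda-v)f(\lambda)}$,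 and $0$ for all other quadruples. Column weights: for $\mathcal J_1=(j_{1,k})_{k=1}^J,\mathcal J_2=(j_{2,k})_{k=1}^J\in\{0,1\}^J$, $i^{(1)}=i_1$, $i^{(k+1)}=i^{(k)}+j_{1,k}-j_{2,k}$, $\Phi_J=\lambda$, $\Phi_k=\Phi_{k+1}\mp2\eta$ according as $j_{1,k+1}=0$ or $1$; $W_J(i_1,\mathcal J_1;i_2,\mathcal J_2\mid v,\lambda)=\prod_{k=1}^JW_1(i^{(k)},j_{1,k};i^{(k+1)},j_{2,k}\mid v+2\eta(k-1),\Phi_k,\Lambda)$ if all $i^{(k)}\ge0$ and $i^{(J+1)}=i_2$, else $0$. The fused weight is $W_J(i_1,j_1;i_2,j_2\mid v,\lambda)=\sum_{|\mathcal J_1|=j_1}W_J(i_1,\mathcal J_1;i_2,\mathcal K\mid v,\lambda)$ for any $\mathcal K\in\{0,1\}^J$ with $|\mathcal K|=j_2$ (independent of the choice of $\mathcal K$), and $0$ if $j_2\notin\{0,\dots,J\}$; $\Lambda$ is a fixed parameter suppressed from notation. *)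

(* Defs.v *)
From Stdlib Require Import Reals Lra Lia ZArith Arith List ClassicalEpsilon.
Import ListNotations.
Open Scope R_scope.

Definition Cplx : Type := (R * R)%type.
Definition Re (z : Cplx) : R := fst z.
Definition Im (z : Cplx) : R := snd z.
Definition Czero : Cplx := (0, 0).
Definition Cone : Cplx := (1, 0).
Definition Ci : Cplx := (0, 1).
Definition RtoC (x : R) : Cplx := (x, 0).
Definition ZtoC (n : Z) : Cplx := (IZR n, 0).
Definition NtoC (n : nat) : Cplx := (INR n, 0).
Definition Cadd (z w : Cplx) : Cplx := (fst z + fst w, snd z + snd w).
Definition Copp (z : Cplx) : Cplx := (- fst z, - snd z).
Definition Csub (z w : Cplx) : Cplx := Cadd z (Copp w).
Definition Cmul (z w : Cplx) : Cplx :=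
  (fst z * fst w - snd z * snd w, fst z * snd w + snd z * fst w).
Definition Cinv (z : Cplx) : Cplx :=
  (fst z / (fst z ^ 2 + snd z ^ 2), - snd z / (fst z ^ 2 + snd z ^ 2)).
Definition Cdiv (z w : Cplx) : Cplx := Cmul z (Cinv w).
Fixpoint Cpow (z : Cplx) (n : nat) : Cplx :=
  match n with O => Cone | S n => Cmul z (Cpow z n) end.
Definition Cexp (z : Cplx) : Cplx := (exp (fst z) * cos (snd z), exp (fst z) * sin (snd z)).

Declare Scope C_scope.
Delimit Scope C_scope with Cplx.
Infix "+" := Cadd : C_scope.
Infix "-" := Csub : C_scope.
Infix "*" := Cmul : C_scope.
Infix "/" := Cdiv : C_scope.
Notation "- z" := (Copp z) : C_scope.
Infix "^" := Cpow : C_scope.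

Definition CPI : Cplx := RtoC PI.

Definition Csinpi (z : Cplx) : Cplx :=
  ((Cexp (Ci * CPI * z) - Cexp (- (Ci * CPI * z))) / (RtoC 2 * Ci))%Cplx.

Definition theta_term (tau z : Cplx) (j : Z) : Cplx :=
  let h := (ZtoC j + RtoC (1/2))%Cplx in
  Cexp (CPI * Ci * tau * h * h + RtoC 2 * CPI * Ci * h * (z + RtoC (1/2)))%Cplx.

Definition theta_partial (tau z : Cplx) (N : nat) : Cplx :=
  fold_right Cadd Czero
    (map (fun m : nat => theta_term tau z (Z.of_nat m - Z.of_nat N)%Z)
         (seq 0 (2 * N + 1))).

Definition theta_sum_is (tau z c : Cplx) : Prop :=
  Un_cv (fun N => Re (theta_partial tau z N)) (Re c) /\
  Un_cv (fun N => Im (theta_partial tau z N)) (Im c).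

(* theta(z) = - sum_{j in Z} exp(...)  (the series converges for Im tau > 0) *)
Definition theta (tau z : Cplx) : Cplx :=
  Copp (epsilon (inhabits Czero) (fun c => theta_sum_is tau z c)).

Inductive fkind : Type := FTheta | FSin.

Definition fsel (fk : fkind) (tau : Cplx) (z : Cplx) : Cplx :=
  match fk with FTheta => theta tau z | FSin => Csinpi z end.

Definition prodC (l : list Cplx) : Cplx := fold_right Cmul Cone l.

Definition poch (f : Cplx -> Cplx) (eta a : Cplx) (k : Z) : Cplx :=
  if (0 <=? k)%Z then
    prodC (map (fun m : nat => f (a - RtoC 2 * eta * NtoC m)%Cplx) (seq 0 (Z.to_nat k)))
  else
    prodC (map (fun m : nat => Cinv (f (a + RtoC 2 * eta * NtoC m)%Cplx))
               (seq 1 (Z.to_nat (- k)))).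

(* W1 f eta k a k' b v lam Lam = W_1(k,a;k',b | v, lam, Lam); intended for k >= 0 *)
Definition W1 (f : Cplx -> Cplx) (eta : Cplx) (k : Z) (a : nat) (k' : Z) (b : nat)
           (v lam Lam : Cplx) : Cplx :=
  let kc := ZtoC k in
  let two := RtoC 2 in
  let D := (f (eta * Lam - v) * f lam)%Cplx in
  if (Nat.eqb a 0 && Nat.eqb b 0 && Z.eqb k' k)%bool then
    (f (eta * (Lam - two * kc) - v) * f (lam + two * kc * eta) / D)%Cplx
  else if (Nat.eqb a 1 && Nat.eqb b 0 && Z.eqb k' (k + 1))%bool then
    (f (v + lam + eta * (two * kc + two - Lam)) * f (two * eta) / D)%Cplx
  else if (Nat.eqb a 0 && Nat.eqb b 1 && Z.eqb k' (k - 1) && Z.leb 1 k)%bool then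
    (f (lam - v + eta * (two * kc - two - Lam)) * f (two * eta * (Lam + Cone - kc))
       * f (two * kc * eta) / (D * f (two * eta)))%Cplx
  else if (Nat.eqb a 1 && Nat.eqb b 1 && Z.eqb k' k)%bool then
    (f (eta * (two * kc - Lam) - v) * f (lam + two * eta * (kc - Lam)) / D)%Cplx
  else Czero.

(* sequences in {0,1}^J are lists of nats of length J; entry k (1-indexed) *)
Definition bit (l : list nat) (k : nat) : nat := nth (k - 1) l 0%nat.

Definition sumZ (l : list Z) : Z := fold_right Z.add 0%Z l.
Definition sumC (l : list Cplx) : Cplx := fold_right Cadd Czero l.

Definition iseq (i1 : Z) (J1 J2 : list nat) (k : nat) : Z :=
  (i1 + sumZ (map (fun m => Z.of_nat (bit J1 m) - Z.of_nat (bit J2 m))%Z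
                  (seq 1 (k - 1))))%Z.

(* Phi_J = lam, Phi_k = Phi_{k+1} - 2 eta if j_{1,k+1} = 0, + 2 eta if = 1 *)
Definition Phi (eta lam : Cplx) (J1 : list nat) (J k : nat) : Cplx :=
  (lam + sumC (map (fun m => if Nat.eqb (bit J1 m) 0 then - (RtoC 2 * eta)
                             else RtoC 2 * eta)
                   (seq (k + 1) (J - k))))%Cplx.

Definition WJ (f : Cplx -> Cplx) (eta Lam : Cplx) (i1 : Z) (J1 : list nat) (i2 : Z)
           (J2 : list nat) (v lam : Cplx) : Cplx :=
  let J := length J1 in
  if (forallb (fun k => Z.leb 0 (iseq i1 J1 J2 k)) (seq 1 (J + 1))
      && Z.eqb (iseq i1 J1 J2 (J + 1)) i2)%bool then
    prodC (map (fun k => W1 f eta (iseq i1 J1 J2 k) (bit J1 k)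
                           (iseq i1 J1 J2 (k + 1)) (bit J2 k)
                           (v + RtoC 2 * eta * NtoC (k - 1))%Cplx
                           (Phi eta lam J1 J k) Lam)
               (seq 1 J))
  else Czero.

Fixpoint all_bits (J : nat) : list (list nat) :=
  match J with
  | O => [ [] ]
  | S J' => map (cons 0%nat) (all_bits J') ++ map (cons 1%nat) (all_bits J')
  end.

(* fused weight W_J(i1, j1; i2, j2 | v, lam), computed with the representative
   K in {0,1}^J of weight j2 = |K| (the paper states the value is independent
   of K; the theorem is stated for every such K). *)
Definition WJfused (f : Cplx -> Cplx) (eta Lam : Cplx) (J : nat) (i1 : Z) (j1 : nat)
           (i2 : Z) (K : list nat) (v lam : Cplx) : Cplx :=
  sumC (map (fun J1 => WJ f eta Lam i1 J1 i2 K v lam)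
            (filter (fun J1 => Nat.eqb (list_sum J1) j1) (all_bits J))).

(* Main.v *)
Require Import Defs.
From Stdlib Require Import Reals ZArith List Lra Lia Psatz Ring.
Import ListNotations.
Open Scope R_scope.
Lemma Cring_th : ring_theory Czero Cone Cadd Cmul Csub Copp (@eq Cplx).
Proof.
  constructor; intros; unfold Cadd, Cmul, Csub, Copp, Czero, Cone;
  repeat match goal with x : Cplx |- _ => destruct x end; simpl; try reflexivity; f_equal; ring.
Qed.
Add Ring Cring : Cring_th.

Lemma Cinv_mul z w : Cinv (Cmul z w) = Cmul (Cinv z) (Cinv w).
Proof.
  destruct z as [a b], w as [c d]; unfold Cinv, Cmul; simpl.
  destruct (Req_dec (a^2+b^2) 0) as [H1|H1].
  { assert (a = 0) by nra. assert (b = 0) by nra. subst. unfold Rdiv. f_equal; ring. }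
  destruct (Req_dec (c^2+d^2) 0) as [H2|H2].
  { assert (c = 0) by nra. assert (d = 0) by nra. subst. unfold Rdiv. f_equal; ring. }
  assert (H3: (a*c-b*d)^2 + (a*d+b*c)^2 <> 0).
  { replace ((a*c-b*d)^2 + (a*d+b*c)^2) with ((a^2+b^2)*(c^2+d^2)) by ring.
    apply Rmult_integral_contrapositive; auto. }
  f_equal; field; repeat split; simpl in *; rewrite ?Rmult_1_r in *; auto.
Qed.

Lemma NtoC_S n : NtoC (S n) = (NtoC n + Cone)%Cplx.
Proof. unfold NtoC, Cadd, Cone. rewrite S_INR. simpl. f_equal; ring. Qed.
Lemma NtoC_0 : NtoC 0 = Czero.
Proof. reflexivity. Qed.
Lemma NtoC_add a b : NtoC (a + b) = (NtoC a + NtoC b)%Cplx.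
Proof. unfold NtoC, Cadd. rewrite plus_INR. simpl. f_equal; ring. Qed.
Lemma ZtoC_nat n : ZtoC (Z.of_nat n) = NtoC n.
Proof. unfold ZtoC, NtoC. rewrite <- INR_IZR_INZ. reflexivity. Qed.

Definition prodf (g : nat -> Cplx) (n : nat) : Cplx := prodC (map g (seq 0 n)).

Lemma prodC_app l1 l2 : prodC (l1 ++ l2) = (prodC l1 * prodC l2)%Cplx.
Proof. induction l1; simpl. ring. rewrite IHl1; ring. Qed.

Lemma prodf_0 g : prodf g 0 = Cone.
Proof. reflexivity. Qed.

Lemma prodf_front g n : prodf g (S n) = (g 0%nat * prodf (fun m => g (S m)) n)%Cplx.
Proof. unfold prodf. simpl. rewrite <- seq_shift, map_map. reflexivity. Qed.

Lemma prodf_back g n : prodf g (S n) = (prodf g n * g n)%Cplx.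
Proof. unfold prodf. rewrite seq_S, map_app, prodC_app. simpl. ring. Qed.

Lemma prodf_ext g h n : (forall m, (m < n)%nat -> g m = h m) -> prodf g n = prodf h n.
Proof.
  intros H. unfold prodf. f_equal. apply map_ext_in. intros a Ha.
  apply in_seq in Ha. apply H. lia.
Qed.

Lemma prodf_rev g n : prodf g n = prodf (fun m => g (n - 1 - m)%nat) n.
Proof.
  revert g; induction n; intros g. reflexivity.
  rewrite prodf_front, (prodf_back (fun m => g (S n - 1 - m)%nat)).
  rewrite (IHn (fun m => g (S m))).
  replace (S n - 1 - n)%nat with 0%nat by lia.
  rewrite (prodf_ext (fun m => g (S (n - 1 - m))) (fun m => g (S n - 1 - m)%nat)).
  ring. intros m Hm. f_equal. lia.
Qed.

Lemma poch_nat f eta a k :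
  poch f eta a (Z.of_nat k) = prodf (fun m => f (a - RtoC 2 * eta * NtoC m)%Cplx) k.
Proof.
  unfold poch. replace (0 <=? Z.of_nat k)%Z with true by (symmetry; apply Z.leb_le; lia).
  rewrite Nat2Z.id. reflexivity.
Qed.
Open Scope C_scope.

Definition Aa eta Lam (i : nat) v := RtoC 2 * eta * NtoC i - eta * Lam - v.
Definition Yy eta Lam lam (i : nat) v (n : nat) := v + lam - eta * Lam + RtoC 2 * eta * NtoC (i + n).
Definition Cc eta Lam lam (i n : nat) := lam + RtoC 2 * eta * (NtoC (i + n) - Lam - Cone).
Definition PA f eta Lam i v o := prodf (fun m => f (Aa eta Lam i v - RtoC 2 * eta * NtoC m)) o.
Definition PY f eta Lam lam i v n z := prodf (fun m => f (Yy eta Lam lam i v n + RtoC 2 * eta * NtoC m)) z.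
Definition PC f eta Lam lam i n o := prodf (fun m => f (Cc eta Lam lam i n - RtoC 2 * eta * NtoC m)) o.
Definition PD1 f eta Lam v n := prodf (fun m => f (eta * Lam - v - RtoC 2 * eta * NtoC m)) n.
Definition PD2 f eta lam n := prodf (fun m => f (lam + RtoC 2 * eta * NtoC m)) n.

Ltac nsimp := repeat (rewrite ?NtoC_add, ?NtoC_S, ?NtoC_0).

Lemma PA_S f eta Lam i v o : PA f eta Lam i v (S o) = f (Aa eta Lam i v) * PA f eta Lam i (v + RtoC 2 * eta) o.
Proof.
  unfold PA. rewrite prodf_front. f_equal. f_equal. rewrite NtoC_0; ring.
  apply prodf_ext; intros. f_equal. unfold Aa. nsimp. ring.
Qed.
Lemma PA_sh f eta Lam i v o : PA f eta Lam (i + 1) (v + RtoC 2 * eta) o = PA f eta Lam i v o.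
Proof. unfold PA. apply prodf_ext; intros. f_equal. unfold Aa. nsimp. ring. Qed.
Lemma PY_S f eta Lam lam i v n z : PY f eta Lam lam i v (S n) (S z) =
  f (Yy eta Lam lam i v (S n)) * PY f eta Lam lam (i + 1) (v + RtoC 2 * eta) n z.
Proof.
  unfold PY. rewrite prodf_front. f_equal. f_equal. rewrite NtoC_0; ring.
  apply prodf_ext; intros. f_equal. unfold Yy. rewrite <- !Nat.add_succ_comm. nsimp. ring.
Qed.
Lemma PY_sh f eta Lam lam i v n z : PY f eta Lam lam i (v + RtoC 2 * eta) n z = PY f eta Lam lam i v (S n) z.
Proof. unfold PY. apply prodf_ext; intros. f_equal. unfold Yy. rewrite Nat.add_succ_r. nsimp. ring. Qed.
Lemma PC_S f eta Lam lam i n o : PC f eta Lam lam i (S n) (S o) = f (Cc eta Lam lam i (S n)) * PC f eta Lam lam i n o.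
Proof.
  unfold PC. rewrite prodf_front. f_equal. f_equal. rewrite NtoC_0; ring.
  apply prodf_ext; intros. f_equal. unfold Cc. rewrite Nat.add_succ_r. nsimp. ring.
Qed.
Lemma PC_sh f eta Lam lam i n o : PC f eta Lam lam (i + 1) n o = PC f eta Lam lam i (S n) o.
Proof. unfold PC. apply prodf_ext; intros. f_equal. unfold Cc. replace (i + 1 + n)%nat with (i + S n)%nat by lia. reflexivity. Qed.
Lemma PD1_S f eta Lam v n : PD1 f eta Lam v (S n) = f (eta * Lam - v) * PD1 f eta Lam (v + RtoC 2 * eta) n.
Proof.
  unfold PD1. rewrite prodf_front. f_equal. f_equal. rewrite NtoC_0; ring.
  apply prodf_ext; intros. f_equal. nsimp. ring.
Qed.
Lemma PD2_S f eta lam n : PD2 f eta lam (S n) = PD2 f eta lam n * f (lam + RtoC 2 * eta * NtoC n).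
Proof. unfold PD2. rewrite prodf_back. reflexivity. Qed.

Definition Rhs f eta Lam lam (i : nat) v (K : list nat) :=
  let n := length K in let o := list_sum K in
  Cpow (f (RtoC 2 * eta)) (n - o) * PA f eta Lam i v o * PY f eta Lam lam i v n (n - o)
  * PC f eta Lam lam i n o * Cinv (PD1 f eta Lam v n) * Cinv (PD2 f eta lam n).

Lemma iseq_1 i J1 J2 : iseq i J1 J2 1 = i.
Proof. unfold iseq. simpl. lia. Qed.

Lemma bit_cons a l k : (1 <= k)%nat -> bit (a :: l) (S k) = bit l k.
Proof. intros H. unfold bit. destruct k. lia. simpl. rewrite Nat.sub_0_r. reflexivity. Qed.

Lemma iseq_shift i a b J1 J2 k : (1 <= k)%nat ->
  iseq i (a :: J1) (b :: J2) (S k) = iseq (i + Z.of_nat a - Z.of_nat b)%Z J1 J2 k.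
Proof.
  intros Hk. unfold iseq. destruct k as [|k]. lia.
  replace (S (S k) - 1)%nat with (S k) by lia. replace (S k - 1)%nat with k by lia.
  simpl seq. rewrite <- (seq_shift k 1). simpl map. rewrite map_map. cbn [sumZ fold_right].
  unfold bit at 1 2. simpl nth.
  rewrite (map_ext_in (fun x => (Z.of_nat (bit (a :: J1) (S x)) - Z.of_nat (bit (b :: J2) (S x)))%Z)
     (fun m => (Z.of_nat (bit J1 m) - Z.of_nat (bit J2 m))%Z)).
  - unfold sumZ. lia.
  - intros m Hm. apply in_seq in Hm. rewrite !bit_cons by lia. reflexivity.
Qed.

Definition bits01 (K : list nat) := Forall (fun b => b = 0%nat \/ b = 1%nat) K.

Lemma sum_le_len K : bits01 K -> (list_sum K <= length K)%nat.
Proof. induction 1 as [|b K Hb HK IH]; simpl. lia. destruct Hb; subst; lia. Qed.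

Lemma guard_lemma K : bits01 K -> forall i : nat,
  (forall k, (1 <= k <= length K + 1)%nat -> (0 <= iseq (Z.of_nat i) (repeat 1%nat (length K)) K k)%Z) /\
  iseq (Z.of_nat i) (repeat 1%nat (length K)) K (length K + 1) = Z.of_nat (i + length K - list_sum K).
Proof.
  induction 1 as [|b K Hb HK IH]; intros i.
  - split. intros k Hk. simpl in Hk. replace k with 1%nat by lia. rewrite iseq_1. lia.
    simpl. rewrite iseq_1. f_equal. lia.
  - assert (Hs := sum_le_len K HK).
    assert (E : (Z.of_nat i + Z.of_nat 1 - Z.of_nat b)%Z = Z.of_nat (i + 1 - b)) by (destruct Hb; subst; lia).
    destruct (IH (i + 1 - b)%nat) as [IH1 IH2]. split.
    + intros k Hk. destruct k as [|k]. lia. destruct k as [|k].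
      rewrite iseq_1. lia.
      simpl length. simpl repeat. rewrite iseq_shift by lia. rewrite E. apply IH1. simpl in Hk. lia.
    + simpl length. simpl repeat. replace (S (length K) + 1)%nat with (S (length K + 1)) by lia.
      rewrite iseq_shift by lia. rewrite E, IH2. simpl list_sum. f_equal. destruct Hb; subst; lia.
Qed.

Lemma bit_ones n k : (1 <= k <= n)%nat -> bit (repeat 1%nat n) k = 1%nat.
Proof.
  intros H. unfold bit. revert k H; induction n; intros k H. lia.
  destruct k as [|k]. lia. destruct k as [|k]. reflexivity.
  simpl repeat. replace (S (S k) - 1)%nat with (S k) by lia. simpl nth.
  specialize (IHn (S k)). replace (S k - 1)%nat with k in IHn by lia. apply IHn. lia.
Qed.

Lemma sumC_const (c : Cplx) (l : list nat) : sumC (map (fun _ => c) l) = NtoC (length l) * c.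
Proof. induction l.
  - change (Czero = NtoC 0 * c). rewrite NtoC_0. ring.
  - change (c + sumC (map (fun _ => c) l) = NtoC (S (length l)) * c).
    rewrite IHl, NtoC_S. ring. Qed.

Lemma Phi_ones eta lam n k : Phi eta lam (repeat 1%nat n) n k = lam + RtoC 2 * eta * NtoC (n - k).
Proof.
  unfold Phi. rewrite (map_ext_in _ (fun _ => RtoC 2 * eta)).
  - rewrite sumC_const, length_seq. ring.
  - intros m Hm. apply in_seq in Hm. rewrite bit_ones by lia. reflexivity.
Qed.

Definition Tm f eta Lam lam (i : Z) (K : list nat) v (n k : nat) :=
  W1 f eta (iseq i (repeat 1%nat n) K k) 1 (iseq i (repeat 1%nat n) K (k + 1)) (bit K k)
     (v + RtoC 2 * eta * NtoC (k - 1)) (lam + RtoC 2 * eta * NtoC (n - k)) Lam.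

Lemma Qrec f eta Lam lam i b K v :
  prodC (map (Tm f eta Lam lam i (b :: K) v (S (length K))) (seq 1 (S (length K)))) =
  Tm f eta Lam lam i (b :: K) v (S (length K)) 1 *
  prodC (map (Tm f eta Lam lam (i + Z.of_nat 1 - Z.of_nat b)%Z K (v + RtoC 2 * eta) (length K)) (seq 1 (length K))).
Proof.
  simpl seq. rewrite <- (seq_shift (length K) 1). simpl map. rewrite map_map. simpl prodC. f_equal. f_equal.
  apply map_ext_in. intros k Hk. apply in_seq in Hk. unfold Tm. simpl repeat.
  replace (S k + 1)%nat with (S (k + 1)) by lia.
  rewrite !iseq_shift by lia. rewrite bit_cons by lia.
  f_equal. destruct k as [|k]. lia. simpl. rewrite Nat.sub_0_r. rewrite NtoC_S. ring.
Qed.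

Lemma W1_10 f eta k v l Lam : W1 f eta k 1 (k + 1)%Z 0 v l Lam =
  f (v + l + eta * (RtoC 2 * ZtoC k + RtoC 2 - Lam)) * f (RtoC 2 * eta) / (f (eta * Lam - v) * f l).
Proof. unfold W1. simpl Nat.eqb. rewrite Z.eqb_refl. reflexivity. Qed.

Lemma W1_11 f eta k v l Lam : W1 f eta k 1 k 1 v l Lam =
  f (eta * (RtoC 2 * ZtoC k - Lam) - v) * f (l + RtoC 2 * eta * (ZtoC k - Lam)) / (f (eta * Lam - v) * f l).
Proof. unfold W1. simpl Nat.eqb. rewrite Z.eqb_refl. reflexivity. Qed.

Lemma Cinv_one : Cinv Cone = Cone.
Proof. unfold Cinv, Cone. simpl. f_equal; field. Qed.

Lemma main_ind f eta Lam lam K : bits01 K -> forall i v,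
  prodC (map (Tm f eta Lam lam (Z.of_nat i) K v (length K)) (seq 1 (length K))) = Rhs f eta Lam lam i v K.
Proof.
  induction 1 as [|b K Hb HK IH]; intros i v.
  - unfold Rhs. simpl. unfold PA, PY, PC, PD1, PD2. rewrite !prodf_0, Cinv_one. ring.
  - assert (Hs := sum_le_len K HK).
    assert (E : (Z.of_nat i + Z.of_nat 1 - Z.of_nat b)%Z = Z.of_nat (i + 1 - b)) by (destruct Hb; subst; lia).
    simpl length. rewrite Qrec, E, IH.
    unfold Tm at 1. rewrite iseq_1. replace (1 + 1)%nat with 2%nat by reflexivity.
    cbn [repeat]. rewrite iseq_shift, iseq_1 by lia. unfold bit at 1. simpl nth.
    replace (1 - 1)%nat with 0%nat by reflexivity. replace (S (length K) - 1)%nat with (length K) by lia.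
    rewrite NtoC_0. replace (v + RtoC 2 * eta * Czero) with v by ring.
    set (n := length K) in *. set (o := list_sum K) in *.
    destruct Hb; subst b.
    + replace (Z.of_nat i + Z.of_nat 1 - Z.of_nat 0)%Z with (Z.of_nat i + 1)%Z by lia.
      rewrite W1_10, Nat.sub_0_r. unfold Rhs. simpl length. simpl list_sum. fold n o.
      rewrite Nat.sub_succ_l by lia. simpl Cpow.
      rewrite PA_sh, PY_S, <- PC_sh, PD1_S, PD2_S, !Cinv_mul, ZtoC_nat.
      replace (v + (lam + RtoC 2 * eta * NtoC n) + eta * (RtoC 2 * NtoC i + RtoC 2 - Lam))
        with (Yy eta Lam lam i v (S n)) by (unfold Yy; nsimp; ring).
      unfold Cdiv. rewrite !Cinv_mul. ring.
    + replace (Z.of_nat i + Z.of_nat 1 - Z.of_nat 1)%Z with (Z.of_nat i) by lia.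
      rewrite W1_11, Nat.add_sub. unfold Rhs. simpl length. simpl list_sum. fold n o.
      simpl Nat.sub.
      rewrite PA_S, <- PY_sh, PC_S, PD1_S, PD2_S, !Cinv_mul, ZtoC_nat.
      replace (eta * (RtoC 2 * NtoC i - Lam) - v) with (Aa eta Lam i v) by (unfold Aa; ring).
      replace (lam + RtoC 2 * eta * NtoC n + RtoC 2 * eta * (NtoC i - Lam))
        with (Cc eta Lam lam i (S n)) by (unfold Cc; nsimp; ring).
      unfold Cdiv. rewrite !Cinv_mul. ring.
Qed.

Lemma all_bits_sum J l : In l (all_bits J) -> (list_sum l <= J)%nat.
Proof.
  revert l; induction J; intros l H; simpl in H.
  - destruct H as [H|[]]; subst; simpl; lia.
  - apply in_app_or in H. destruct H as [H|H]; apply in_map_iff in H; destruct H as [x [<- Hx]];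
    apply IHJ in Hx; simpl; lia.
Qed.

Lemma filter_nil_all {A} (p : A -> bool) l : (forall x, In x l -> p x = false) -> filter p l = [].
Proof. induction l; simpl; intros H. reflexivity. rewrite H by auto. apply IHl. auto. Qed.

Lemma filter_ones J : filter (fun J1 => Nat.eqb (list_sum J1) J) (all_bits J) = [repeat 1%nat J].
Proof.
  induction J. reflexivity.
  simpl all_bits. rewrite filter_app, !filter_map_swap.
  rewrite (filter_nil_all (fun a => Nat.eqb (list_sum (0%nat :: a)) (S J))).
  - simpl. change (map (cons 1%nat) (filter (fun J1 => Nat.eqb (list_sum J1) J) (all_bits J)) = [repeat 1%nat (S J)]).
    rewrite IHJ. reflexivity.
  - intros x Hx. apply all_bits_sum in Hx. apply Nat.eqb_neq. simpl. lia.
Qed.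

Lemma PY_rev f eta Lam lam i v n z : PY f eta Lam lam i v n z =
  prodf (fun m => f (v + lam - eta * Lam + RtoC 2 * eta * NtoC (i + n + z - 1) - RtoC 2 * eta * NtoC m)) z.
Proof.
  unfold PY. rewrite prodf_rev. apply prodf_ext. intros m Hm. f_equal. unfold Yy.
  replace (i + n + z - 1)%nat with ((i + n) + (z - 1 - m) + m)%nat by lia. nsimp. ring.
Qed.

Lemma PD2_rev f eta lam n : PD2 f eta lam n =
  prodf (fun m => f (lam + RtoC 2 * eta * NtoC (n - 1) - RtoC 2 * eta * NtoC m)) n.
Proof.
  unfold PD2. rewrite prodf_rev. apply prodf_ext. intros m Hm. f_equal.
  assert (Heq : NtoC (n - 1) = NtoC (n - 1 - m) + NtoC m) by (rewrite <- NtoC_add; f_equal; lia).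
  rewrite Heq. ring.
Qed.

Close Scope C_scope.
Theorem lemma3p8 (fk : fkind) (eta tau Lam v lam : Cplx) (Htau : 0 < Im tau)
  (i J j : nat) (HJ : (0 < J)%nat) (Hj : (j <= J)%nat)
  (K : list nat) (HK01 : Forall (fun b => b = 0%nat \/ b = 1%nat) K)
  (HKlen : length K = J) (HKsum : list_sum K = j)
  (* genericity: every denominator occurring on either side is nonzero *)
  (Hnz2 : fsel fk tau (RtoC 2 * eta)%Cplx <> Czero)
  (HnzV : forall m : nat, (m < J)%nat ->
            fsel fk tau (eta * Lam - v - RtoC 2 * eta * NtoC m)%Cplx <> Czero)
  (HnzL : forall m : Z, (Z.abs m < Z.of_nat J)%Z ->
            fsel fk tau (lam + RtoC 2 * eta * ZtoC m)%Cplx <> Czero) :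
  let f := fsel fk tau in
  WJfused f eta Lam J (Z.of_nat i) J (Z.of_nat (i + J - j)) K v lam =
  (Cpow (f (RtoC 2 * eta)) (J - j)
   * poch f eta (RtoC 2 * eta * NtoC i - eta * Lam - v) (Z.of_nat j)
   / poch f eta (eta * Lam - v) (Z.of_nat J)
   * (poch f eta (v + lam - eta * Lam + RtoC 2 * eta * NtoC (i + 2 * J - j - 1))
           (Z.of_nat (J - j))
      * poch f eta (lam + RtoC 2 * eta * (NtoC (i + J) - Lam - Cone)) (Z.of_nat j))
   / poch f eta (lam + RtoC 2 * eta * NtoC (J - 1)) (Z.of_nat J))%Cplx.
Proof.
  intro f. clearbody f. clear Hnz2 HnzV HnzL Htau.
  unfold WJfused. rewrite filter_ones. cbn [map sumC fold_right].
  replace (WJ f eta Lam (Z.of_nat i) (repeat 1%nat J) (Z.of_nat (i + J - j)) K v lam + Czero)%Cplx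
    with (WJ f eta Lam (Z.of_nat i) (repeat 1%nat J) (Z.of_nat (i + J - j)) K v lam) by ring.
  subst J j. destruct (guard_lemma K HK01 i) as [G1 G2].
  unfold WJ. rewrite repeat_length.
  replace (forallb (fun k => (0 <=? iseq (Z.of_nat i) (repeat 1%nat (length K)) K k)%Z)
            (seq 1 (length K + 1))) with true.
  2:{ symmetry. apply forallb_forall. intros k Hk. apply in_seq in Hk. apply Z.leb_le. apply G1. lia. }
  rewrite G2, Z.eqb_refl. simpl andb.
  rewrite (map_ext_in _ (Tm f eta Lam lam (Z.of_nat i) K v (length K))).
  2:{ intros k Hk. apply in_seq in Hk. unfold Tm. rewrite bit_ones by lia. rewrite Phi_ones. reflexivity. }
  rewrite main_ind by exact HK01.
  unfold Rhs. rewrite !poch_nat.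
  rewrite PY_rev, PD2_rev.
  replace (i + length K + (length K - list_sum K) - 1)%nat with (i + 2 * length K - list_sum K - 1)%nat
    by (pose proof (sum_le_len K HK01); lia).
  unfold PA, PC, PD1, Aa, Cc. unfold Cdiv. ring.
Qed.
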